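(* There is an absolute constant $A>0$ such that for every $r\ge1$ there exists a function $h:\mathbb{R}\to\mathbb{R}$ with $h(x)=x$ for all $x\in[-r,r]$, such that $$\int_{\mathbb{R}}|\hat h(\omega)|\,d\omega\le A r^{3/2}\quad\text{and}\quad\int_{\mathbb{R}}|\omega|\,|\hat h(\omega)|\,d\omega\le A r^{1/2}.$$
   Context: Fourier transform: $\hat h(\omega)=\frac{1}{2\pi}\int_{\mathbb{R}}h(x)e^{-i\omega x}dx$. *)

(* Defs.v *)
From Stdlib Require Import Reals Lra.
Open Scope R_scope.

Definition improper_int (f : R -> R) (l : R) : Prop :=
  (forall a b : R, inhabited (Riemann_integrable f a b)) /\
  forall eps : R, 0 < eps -> exists M : R, forall a b : R,
    a <= - M -> M <= b ->
    forall pr : Riemann_integrable f a b, Rabs (RiemannInt pr - l) < eps.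

Definition abs_integrable (h : R -> R) : Prop :=
  (forall a b : R, inhabited (Riemann_integrable h a b)) /\
  exists l : R, improper_int (fun x => Rabs (h x)) l.

(* Fourier transform  hat h(w) = (1/(2 pi)) int_R h(x) e^{-i w x} dx,
   given by its real part [hr] and imaginary part [hi]:
   hr w = (1/2pi) int h(x) cos(w x) dx,  hi w = -(1/2pi) int h(x) sin(w x) dx. *)
Definition is_fourier (h hr hi : R -> R) : Prop :=
  forall w : R,
    improper_int (fun x => h x * cos (w * x) / (2 * PI)) (hr w) /\
    improper_int (fun x => - (h x * sin (w * x)) / (2 * PI)) (hi w).

Definition cmod (re im : R) : R := sqrt (re ^ 2 + im ^ 2).

(* Main.v *)
Require Import Defs.
From Stdlib Require Import Reals Lra Classical.
From Coquelicot Require Import Coquelicot.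
Require Import Defs.
Open Scope R_scope.


Lemma Chasles_R (g : R -> R) a b c : ex_RInt g a b -> ex_RInt g b c ->
  RInt g a b + RInt g b c = RInt g a c.
Proof. intros; apply (RInt_Chasles g a b c); auto. Qed.

Lemma ex_RInt_all (f : R -> R) (T0 : R) :
  (forall T, T0 <= T -> ex_RInt f (-T) T) -> forall a b, ex_RInt f a b.
Proof.
  intros H a b.
  set (T := Rmax T0 (Rmax (Rabs a) (Rabs b))).
  assert (HT := H T (Rmax_l _ _)).
  assert (H1 : Rabs a <= T) by (unfold T; eapply Rle_trans; [apply Rmax_l|apply Rmax_r]).
  assert (H2 : Rabs b <= T) by (unfold T; eapply Rle_trans; [apply Rmax_r|apply Rmax_r]).
  assert (Ha : -T <= a <= T) by (unfold Rabs in H1; destruct (Rcase_abs a); lra).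
  assert (Hb : -T <= b <= T) by (unfold Rabs in H2; destruct (Rcase_abs b); lra).
  destruct (Rle_lt_dec a b).
  - apply (@ex_RInt_Chasles_2 R_CompleteNormedModule f (-T) a b). lra.
    apply (@ex_RInt_Chasles_1 R_CompleteNormedModule f (-T) b T); [lra|exact HT].
  - apply ex_RInt_swap.
    apply (@ex_RInt_Chasles_2 R_CompleteNormedModule f (-T) b a). lra.
    apply (@ex_RInt_Chasles_1 R_CompleteNormedModule f (-T) a T); [lra|exact HT].
Qed.

Lemma exd_cont (f : R -> R) x : ex_derive f x -> continuous f x.
Proof. apply (@ex_derive_continuous R_AbsRing R_NormedModule). Qed.

Lemma exR_cont (f : R -> R) a b : (forall x, continuous f x) -> ex_RInt f a b.
Proof. intros H; apply (@ex_RInt_continuous R_CompleteNormedModule); auto. Qed.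

Lemma exR_der (f : R -> R) a b : (forall x, ex_derive f x) -> ex_RInt f a b.
Proof. intros H; apply exR_cont; intros; apply exd_cont; auto. Qed.

Lemma RInt_plusR (f g : R -> R) a b : ex_RInt f a b -> ex_RInt g a b ->
  RInt (fun x => f x + g x) a b = RInt f a b + RInt g a b.
Proof. apply (@RInt_plus R_CompleteNormedModule). Qed.

Lemma RInt_minusR (f g : R -> R) a b : ex_RInt f a b -> ex_RInt g a b ->
  RInt (fun x => f x - g x) a b = RInt f a b - RInt g a b.
Proof. apply (@RInt_minus R_CompleteNormedModule). Qed.

Lemma RInt_scalR (f : R -> R) a b l : ex_RInt f a b ->
  RInt (fun x => l * f x) a b = l * RInt f a b.
Proof. apply (@RInt_scal R_CompleteNormedModule). Qed.

Lemma ext_piece (f g : R -> R) a b : a <= b -> (forall x, a < x < b -> f x = g x) ->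
  ex_RInt g a b -> ex_RInt f a b /\ RInt f a b = RInt g a b.
Proof.
  intros Hab H Hg. split.
  - apply ex_RInt_ext with g; [|exact Hg].
    rewrite Rmin_left, Rmax_right by lra. intros; symmetry; auto.
  - apply RInt_ext. rewrite Rmin_left, Rmax_right by lra. auto.
Qed.

Lemma zero_piece (f : R -> R) a b : a <= b -> (forall x, a < x < b -> f x = 0) ->
  ex_RInt f a b /\ RInt f a b = 0.
Proof.
  intros Hab H. destruct (ext_piece f (fun _ => 0) a b Hab H) as [H1 H2].
  apply ex_RInt_const. split; auto. rewrite H2, RInt_const. unfold scal; simpl; unfold mult; simpl; ring.
Qed.

Lemma pw_RInt (f g2 g3 g4 : R -> R) (a x1 x2 x3 x4 b : R) :
  a <= x1 -> x1 <= x2 -> x2 <= x3 -> x3 <= x4 -> x4 <= b ->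
  (forall x, x < x1 -> f x = 0) ->
  (forall x, x1 < x < x2 -> f x = g2 x) ->
  (forall x, x2 < x < x3 -> f x = g3 x) ->
  (forall x, x3 < x < x4 -> f x = g4 x) ->
  (forall x, x4 < x -> f x = 0) ->
  ex_RInt g2 x1 x2 -> ex_RInt g3 x2 x3 -> ex_RInt g4 x3 x4 ->
  ex_RInt f a b /\ RInt f a b = RInt g2 x1 x2 + RInt g3 x2 x3 + RInt g4 x3 x4.
Proof.
  intros h1 h2 h3 h4 h5 e1 e2 e3 e4 e5 i2 i3 i4.
  destruct (zero_piece f a x1) as [j1 k1]; auto. intros; apply e1; lra.
  destruct (ext_piece f g2 x1 x2) as [j2 k2]; auto.
  destruct (ext_piece f g3 x2 x3) as [j3 k3]; auto.
  destruct (ext_piece f g4 x3 x4) as [j4 k4]; auto.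
  destruct (zero_piece f x4 b) as [j5 k5]; auto. intros; apply e5; lra.
  assert (J12 := ex_RInt_Chasles _ _ _ _ j1 j2).
  assert (J13 := ex_RInt_Chasles _ _ _ _ J12 j3).
  assert (J14 := ex_RInt_Chasles _ _ _ _ J13 j4).
  split. apply (ex_RInt_Chasles _ _ _ _ J14 j5).
  rewrite <- (Chasles_R f a x4 b), <- (Chasles_R f a x3 x4), <- (Chasles_R f a x2 x3),
    <- (Chasles_R f a x1 x2); auto. lra.
Qed.

Lemma ibp_cos (p p1 : R -> R) (w a b : R) :
  (forall x, is_derive p x (p1 x)) -> (forall x, ex_derive p1 x) ->
  w * RInt (fun x => p x * cos (w*x)) a b =
  (p b * sin (w*b) - p a * sin (w*a)) - RInt (fun x => p1 x * sin (w*x)) a b.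
Proof.
  intros Hd Hd1.
  assert (Hp : forall x, ex_derive p x) by (intros x; eexists; apply Hd).
  assert (HF : is_RInt (fun x => p1 x * sin (w*x) + w * (p x * cos (w*x))) a b
                 (p b * sin (w*b) - p a * sin (w*a))).
  { apply (is_RInt_derive (fun x => p x * sin (w*x))).
    - intros x _. auto_derive. exact (Hp x). replace (Derive (fun x0 => p x0) x) with (p1 x) by (symmetry; apply is_derive_unique; apply Hd). ring.
    - intros x _. apply exd_cont. auto_derive; auto. }
  apply (@is_RInt_unique R_CompleteNormedModule) in HF.
  rewrite RInt_plusR, RInt_scalR in HF.
  lra. all: apply exR_der; intros; auto_derive; auto.
Qed.

Lemma ibp_sin (p p1 : R -> R) (w a b : R) :
  (forall x, is_derive p x (p1 x)) -> (forall x, ex_derive p1 x) ->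
  w * RInt (fun x => p x * sin (w*x)) a b =
  RInt (fun x => p1 x * cos (w*x)) a b - (p b * cos (w*b) - p a * cos (w*a)).
Proof.
  intros Hd Hd1.
  assert (Hp : forall x, ex_derive p x) by (intros x; eexists; apply Hd).
  assert (HF : is_RInt (fun x => p1 x * cos (w*x) + (-w) * (p x * sin (w*x))) a b
                 (p b * cos (w*b) - p a * cos (w*a))).
  { apply (is_RInt_derive (fun x => p x * cos (w*x))).
    - intros x _. auto_derive. exact (Hp x). replace (Derive (fun x0 => p x0) x) with (p1 x) by (symmetry; apply is_derive_unique; apply Hd). ring.
    - intros x _. apply exd_cont. auto_derive; auto. }
  apply (@is_RInt_unique R_CompleteNormedModule) in HF.
  rewrite RInt_plusR, RInt_scalR in HF.
  lra. all: apply exR_der; intros; auto_derive; auto.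
Qed.

Lemma cos_lip u v : Rabs (cos u - cos v) <= Rabs (u - v).
Proof.
  destruct (MVT_abs cos (fun c => - sin c) v u) as [c [Hc _]].
  intros; apply derivable_pt_lim_cos.
  rewrite Hc. rewrite Rabs_Ropp. rewrite <- (Rmult_1_l (Rabs (u - v))) at 2.
  apply Rmult_le_compat_r. apply Rabs_pos.
  destruct (SIN_bound c). unfold Rabs; destruct Rcase_abs; lra.
Qed.

Lemma sin_lip u v : Rabs (sin u - sin v) <= Rabs (u - v).
Proof.
  destruct (MVT_abs sin cos v u) as [c [Hc _]].
  intros; apply derivable_pt_lim_sin.
  rewrite Hc. rewrite <- (Rmult_1_l (Rabs (u - v))) at 2.
  apply Rmult_le_compat_r. apply Rabs_pos.
  destruct (COS_bound c). unfold Rabs; destruct Rcase_abs; lra.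
Qed.

Lemma lip_cont (F : R -> R) w0 K : 0 <= K ->
  (forall w, Rabs (F w - F w0) <= K * Rabs (w - w0)) -> continuity_pt F w0.
Proof.
  intros HK H. unfold continuity_pt, continue_in, limit1_in, limit_in.
  intros eps He. exists (eps / (K + 1)). split.
  apply Rdiv_lt_0_compat; lra.
  intros x [_ Hx]. simpl in *. unfold R_dist in *.
  eapply Rle_lt_trans. apply H.
  assert (K * Rabs (x - w0) <= K * (eps / (K + 1))) by (apply Rmult_le_compat_l; lra).
  assert (K * (eps / (K + 1)) = eps - eps / (K+1)) by (field; lra).
  assert (0 < eps / (K+1)) by (apply Rdiv_lt_0_compat; lra).
  lra.
Qed.

Lemma cont_cpt (f : R -> R) x : continuous f x -> continuity_pt f x.
Proof. intros; apply continuity_pt_filterlim; auto. Qed.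
Lemma cpt_cont (f : R -> R) x : continuity_pt f x -> continuous f x.
Proof. intros; apply continuity_pt_filterlim; auto. Qed.

Lemma param_cont (tr : R -> R) (p : R -> R) a b :
  a <= b -> (forall x, ex_derive p x) -> (forall x, ex_derive tr x) ->
  (forall u v, Rabs (tr u - tr v) <= Rabs (u - v)) ->
  forall w0, continuity_pt (fun w => RInt (fun x => p x * tr (w*x)) a b) w0.
Proof.
  intros Hab Hp Ht Hl w0.
  destruct (continuity_ab_maj (fun x => Rabs (p x * x)) a b Hab) as [Mx [HM _]].
  { intros c _. apply continuity_pt_comp with (f2 := Rabs).
    apply cont_cpt, exd_cont. auto_derive; auto. apply Rcontinuity_abs. }
  apply lip_cont with ((b - a) * Rabs (p Mx * Mx)).
  apply Rmult_le_pos; [lra|apply Rabs_pos].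
  intros w.
  rewrite <- RInt_minusR.
  2,3: apply exR_der; intros; auto_derive; auto.
  rewrite Rmult_assoc.
  apply abs_RInt_le_const; auto.
  apply exR_der; intros; auto_derive; auto.
  intros t Ht'.
  replace (p t * tr (w * t) - p t * tr (w0 * t)) with (p t * (tr (w*t) - tr (w0*t))) by ring.
  rewrite Rabs_mult.
  assert (H1 := Hl (w*t) (w0*t)).
  replace (w * t - w0 * t) with (t * (w - w0)) in H1 by ring.
  rewrite Rabs_mult in H1.
  assert (H2 := HM t Ht'). simpl in H2.
  rewrite Rabs_mult in H2.
  apply Rle_trans with (Rabs (p t) * (Rabs t * Rabs (w - w0))).
  apply Rmult_le_compat_l; auto. apply Rabs_pos.
  rewrite Rabs_mult. rewrite <- Rmult_assoc. apply Rmult_le_compat_r. apply Rabs_pos.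
  rewrite <- Rabs_mult in H2 |- *; rewrite <- Rabs_mult; exact H2.
Qed.

Lemma improper_from_bound (g : R -> R) (B : R) :
  (forall x, continuity_pt g x) -> (forall x, 0 <= g x) ->
  (forall n, 0 <= n -> RInt g (-n) n <= B) ->
  exists I, improper_int g I /\ I <= B.
Proof.
  intros Hc Hpos Hb.
  assert (Hex : forall a b, ex_RInt g a b) by (intros; apply exR_cont; intros; apply cpt_cont; auto).
  assert (Hmono : forall a b c d, a <= b -> b <= c -> c <= d -> RInt g b c <= RInt g a d).
  { intros a b c d h1 h2 h3.
    rewrite <- (Chasles_R g a c d), <- (Chasles_R g a b c); auto.
    assert (0 <= RInt g a b) by (apply RInt_ge_0; auto).
    assert (0 <= RInt g c d) by (apply RInt_ge_0; auto). lra. }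
  set (E := fun y => exists n, 0 <= n /\ y = RInt g (-n) n).
  assert (HbE : bound E) by (exists B; intros y [n [hn ->]]; auto).
  assert (HnE : exists y, E y) by (exists (RInt g (-0) 0); exists 0; split; [lra|auto]).
  destruct (completeness E HbE HnE) as [I [Hub Hl]].
  exists I. split; [split|].
  - intros a b; constructor; apply ex_RInt_Reals_0; auto.
  - intros eps He.
    destruct (classic (exists y, E y /\ I - eps < y)) as [[y [[n0 [hn0 ->]] Hy]]|Hno].
    + exists n0. intros a b Ha Hb' pr. rewrite <- RInt_Reals.
      assert (L1 : RInt g (-n0) n0 <= RInt g a b) by (apply Hmono; lra).
      set (N := Rmax (-a) b).
      assert (HN1 : -a <= N) by apply Rmax_l. assert (HN2 : b <= N) by apply Rmax_r.
      assert (L2 : RInt g a b <= RInt g (-N) N) by (apply Hmono; lra).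
      assert (L3 : RInt g (-N) N <= I) by (apply Hub; exists N; split; [lra|auto]).
      unfold Rabs; destruct Rcase_abs; lra.
    + exfalso.
      assert (I <= I - eps); [|lra].
      apply Hl. intros y Ey. destruct (Rle_lt_dec y (I - eps)); auto.
      exfalso; apply Hno; exists y; auto.
  - apply Hl. intros y [n [hn ->]]; auto.
Qed.

Lemma atan_int r n : 0 < r -> 0 <= n ->
  RInt (fun w => / (1 + (r*w)^2)) (-n) n <= PI / r.
Proof.
  intros Hr Hn.
  assert (HI : is_RInt (fun w => / (1 + (r*w)^2)) (-n) n (atan (r*n) / r - atan (r*(-n)) / r)).
  { apply (is_RInt_derive (fun w => atan (r*w) / r)).
    - intros x _. auto_derive. auto.
      assert (0 < 1 + (r*x)^2) by (generalize (pow2_ge_0 (r*x)); lra).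
      replace (r * x * (r * x * 1)) with ((r*x)^2) by ring. field. lra.
    - intros x _. apply exd_cont. auto_derive.
      apply Rgt_not_eq. apply Rplus_lt_le_0_compat. lra. apply pow2_ge_0. }
  apply (@is_RInt_unique R_CompleteNormedModule) in HI. rewrite HI.
  replace (r * - n) with (- (r*n)) by ring. rewrite atan_opp.
  destruct (atan_bound (r*n)).
  replace (atan (r * n) / r - - atan (r * n) / r) with (2 * atan (r*n) * / r) by (field; lra).
  unfold Rdiv. apply Rmult_le_compat_r. left; apply Rinv_0_lt_compat; lra. lra.
Qed.

Definition q (t : R) := 1 + t - 16 * t^3 + 23 * t^4 - 9 * t^5.
Definition q1 (t : R) := 1 - 48 * t^2 + 92 * t^3 - 45 * t^4.
Definition q2 (t : R) := - 96 * t + 276 * t^2 - 180 * t^3.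
Definition q3 (t : R) := - 96 + 552 * t - 540 * t^2.

Definition pR0 r x := r * q ((x - r) / r).
Definition pR1 r x := q1 ((x - r) / r).
Definition pR2 r x := q2 ((x - r) / r) / r.
Definition pR3 r x := q3 ((x - r) / r) / (r * r).
Definition pL0 r x := - pR0 r (- x).
Definition pL1 r x := pR1 r (- x).
Definition pL2 r x := - pR2 r (- x).
Definition pL3 r x := pR3 r (- x).
Definition pM0 (x : R) := x.
Definition pM1 (x : R) := 1.
Definition pM2 (x : R) := 0.
Definition pM3 (x : R) := 0.

Section D.
Variable r : R.
Hypothesis Hr : 0 < r.

Lemma dR0 x : is_derive (pR0 r) x (pR1 r x).
Proof. unfold pR0, pR1, q, q1. auto_derive. auto. field. lra. Qed.
Lemma dR1 x : is_derive (pR1 r) x (pR2 r x).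
Proof. unfold pR1, pR2, q1, q2. auto_derive. auto. field. lra. Qed.
Lemma dR2 x : is_derive (pR2 r) x (pR3 r x).
Proof. unfold pR2, pR3, q2, q3. auto_derive. auto. field. lra. Qed.
Lemma dL0 x : is_derive (pL0 r) x (pL1 r x).
Proof. unfold pL0, pL1, pR0, pR1, q, q1. auto_derive. auto. field. lra. Qed.
Lemma dL1 x : is_derive (pL1 r) x (pL2 r x).
Proof. unfold pL1, pL2, pR1, pR2, q1, q2. auto_derive. auto. field. lra. Qed.
Lemma dL2 x : is_derive (pL2 r) x (pL3 r x).
Proof. unfold pL2, pL3, pR2, pR3, q2, q3. auto_derive. auto. field. lra. Qed.
Lemma dM0 x : is_derive pM0 x (pM1 x).
Proof. unfold pM0, pM1. auto_derive; auto. Qed.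
Lemma dM1 x : is_derive pM1 x (pM2 x).
Proof. unfold pM1, pM2. auto_derive; auto. Qed.
Lemma dM2 x : is_derive pM2 x (pM3 x).
Proof. unfold pM2, pM3. auto_derive; auto. Qed.
Lemma eR3 x : ex_derive (pR3 r) x.
Proof. unfold pR3, q3. auto_derive. lra. Qed.
Lemma eL3 x : ex_derive (pL3 r) x.
Proof. unfold pL3, pR3, q3. auto_derive. lra. Qed.
Lemma eM3 x : ex_derive pM3 x.
Proof. unfold pM3. auto_derive; auto. Qed.

End D.

Definition T3 (fL fM fR tr : R -> R) r w :=
  RInt (fun x => fL x * tr (w*x)) (-(2*r)) (-r) + RInt (fun x => fM x * tr (w*x)) (-r) r
  + RInt (fun x => fR x * tr (w*x)) r (2*r).

Lemma chain (fL fM fR gL gM gR : R -> R) r w :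
  (forall x, is_derive fL x (gL x)) -> (forall x, is_derive fM x (gM x)) ->
  (forall x, is_derive fR x (gR x)) ->
  (forall x, ex_derive gL x) -> (forall x, ex_derive gM x) -> (forall x, ex_derive gR x) ->
  fL (-(2*r)) = 0 -> fL (-r) = fM (-r) -> fM r = fR r -> fR (2*r) = 0 ->
  w * T3 fL fM fR cos r w = - T3 gL gM gR sin r w /\
  w * T3 fL fM fR sin r w = T3 gL gM gR cos r w.
Proof.
  intros d1 d2 d3 e1 e2 e3 b1 b2 b3 b4. unfold T3. split.
  - rewrite !Rmult_plus_distr_l. rewrite (ibp_cos fL gL), (ibp_cos fM gM), (ibp_cos fR gR); auto.
    rewrite b1, b2, b3, b4. ring.
  - rewrite !Rmult_plus_distr_l. rewrite (ibp_sin fL gL), (ibp_sin fM gM), (ibp_sin fR gR); auto.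
    rewrite b1, b2, b3, b4. ring.
Qed.

Lemma T3_bound (fL fM fR tr : R -> R) r w ML MM MR : 0 < r ->
  (forall x, ex_derive fL x) -> (forall x, ex_derive fM x) -> (forall x, ex_derive fR x) ->
  (forall x, ex_derive tr x) -> (forall u, Rabs (tr u) <= 1) ->
  (forall x, -(2*r) <= x <= -r -> Rabs (fL x) <= ML) ->
  (forall x, -r <= x <= r -> Rabs (fM x) <= MM) ->
  (forall x, r <= x <= 2*r -> Rabs (fR x) <= MR) ->
  Rabs (T3 fL fM fR tr r w) <= r * ML + 2 * r * MM + r * MR.
Proof.
  intros Hr eL eM eR et bt bL bM bR. unfold T3.
  assert (K : forall (f : R -> R) a b M, a <= b -> (forall x, ex_derive f x) ->
    (forall x, a <= x <= b -> Rabs (f x) <= M) ->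
    Rabs (RInt (fun x => f x * tr (w*x)) a b) <= (b - a) * M).
  { intros f a b M hab ef bf. apply abs_RInt_le_const; auto.
    apply exR_der; intros; auto_derive; auto.
    intros t ht. rewrite Rabs_mult. rewrite <- (Rmult_1_r M).
    apply Rmult_le_compat; auto using Rabs_pos. }
  eapply Rle_trans. apply Rabs_triang.
  eapply Rle_trans. apply Rplus_le_compat_r. apply Rabs_triang.
  assert (H1 := K fL (-(2*r)) (-r) ML ltac:(lra) eL bL).
  assert (H2 := K fM (-r) r MM ltac:(lra) eM bM).
  assert (H3 := K fR r (2*r) MR ltac:(lra) eR bR).
  lra.
Qed.

Lemma pow_bounds t : 0 <= t <= 1 ->
  0 <= t^2 <= 1 /\ 0 <= t^3 <= 1 /\ 0 <= t^4 <= 1 /\ 0 <= t^5 <= 1.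
Proof.
  intros [h0 h1].
  assert (A : forall n, 0 <= t^n <= 1).
  { induction n; simpl; [lra|]. destruct IHn. split. nra. nra. }
  repeat split; apply A.
Qed.

Lemma qb t : 0 <= t <= 1 ->
  Rabs (q t) <= 50 /\ Rabs (q2 t) <= 552 /\ Rabs (q3 t) <= 1188.
Proof.
  intros Ht. destruct (pow_bounds t Ht) as [a2 [a3 [a4 a5]]].
  unfold q, q2, q3. repeat split; apply Rabs_le; lra.
Qed.

Section B.
Variable r : R.
Hypothesis Hr : 0 < r.

Lemma tR x : r <= x <= 2*r -> 0 <= (x - r) / r <= 1.
Proof.
  intros h. split. apply Rdiv_le_0_compat; lra.
  apply Rmult_le_reg_r with r; auto. unfold Rdiv; rewrite Rmult_assoc, Rinv_l; lra.
Qed.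

Lemma bR0 x : r <= x <= 2*r -> Rabs (pR0 r x) <= 50 * r.
Proof.
  intros h. destruct (qb _ (tR x h)) as [b _]. unfold pR0.
  rewrite Rabs_mult, Rabs_pos_eq by lra. nra.
Qed.
Lemma bR2 x : r <= x <= 2*r -> Rabs (pR2 r x) <= 552 / r.
Proof.
  intros h. destruct (qb _ (tR x h)) as [_ [b _]]. unfold pR2, Rdiv.
  rewrite Rabs_mult, Rabs_inv, (Rabs_pos_eq r) by lra.
  apply Rmult_le_compat_r; auto. left; apply Rinv_0_lt_compat; auto.
Qed.
Lemma bR3 x : r <= x <= 2*r -> Rabs (pR3 r x) <= 1188 / (r*r).
Proof.
  intros h. destruct (qb _ (tR x h)) as [_ [_ b]]. unfold pR3, Rdiv.
  rewrite Rabs_mult, Rabs_inv, (Rabs_pos_eq (r*r)) by nra.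
  apply Rmult_le_compat_r; auto. left; apply Rinv_0_lt_compat; nra.
Qed.
Lemma bL0 x : -(2*r) <= x <= -r -> Rabs (pL0 r x) <= 50 * r.
Proof. intros h. unfold pL0. rewrite Rabs_Ropp. apply bR0. lra. Qed.
Lemma bL2 x : -(2*r) <= x <= -r -> Rabs (pL2 r x) <= 552 / r.
Proof. intros h. unfold pL2. rewrite Rabs_Ropp. apply bR2. lra. Qed.
Lemma bL3 x : -(2*r) <= x <= -r -> Rabs (pL3 r x) <= 1188 / (r*r).
Proof. intros h. unfold pL3. apply bR3. lra. Qed.
Lemma bM0 x : -r <= x <= r -> Rabs (pM0 x) <= r.
Proof. intros h. unfold pM0. apply Rabs_le. lra. Qed.
Lemma bM2 x : -r <= x <= r -> Rabs (pM2 x) <= 0.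
Proof. intros h. unfold pM2. rewrite Rabs_R0. lra. Qed.
Lemma bM3 x : -r <= x <= r -> Rabs (pM3 x) <= 0.
Proof. intros h. unfold pM3. rewrite Rabs_R0. lra. Qed.

End B.

Lemma cmod_le c s : cmod (c / (2*PI)) (- s / (2*PI)) <= Rabs c + Rabs s.
Proof.
  assert (HP : 3 < PI) by (generalize PI2_3_2; lra).
  set (x := c / (2*PI)). set (y := - s / (2*PI)).
  apply Rle_trans with (Rabs x + Rabs y).
  - unfold cmod. rewrite <- (sqrt_pow2 (Rabs x + Rabs y)).
    2: generalize (Rabs_pos x) (Rabs_pos y); lra.
    apply sqrt_le_1_alt. rewrite <- (pow2_abs x), <- (pow2_abs y).
    generalize (Rabs_pos x) (Rabs_pos y). nra.
  - unfold x, y, Rdiv. rewrite !Rabs_mult, Rabs_Ropp.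
    rewrite Rabs_inv, (Rabs_pos_eq (2*PI)) by lra.
    assert (0 < / (2*PI) <= 1).
    { split. apply Rinv_0_lt_compat; lra.
      rewrite <- Rinv_1. apply Rinv_le_contravar; lra. }
    generalize (Rabs_pos c) (Rabs_pos s). nra.
Qed.

Lemma ptwise (c s w r P Q R0 : R) : 0 < r ->
  Rabs c <= P -> Rabs s <= P -> Rabs (w^2 * c) <= Q -> Rabs (w^2 * s) <= Q ->
  Rabs (w^3 * c) <= R0 -> Rabs (w^3 * s) <= R0 ->
  cmod (c / (2*PI)) (- s / (2*PI)) * (1 + (r*w)^2) <= 2*P + 2*(r*r)*Q /\
  Rabs w * cmod (c / (2*PI)) (- s / (2*PI)) * (1 + (r*w)^2) <= P/r + r*Q + 2*(r*r)*R0.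
Proof.
  intros Hr h1 h2 h3 h4 h5 h6.
  assert (Hg := cmod_le c s).
  set (g := cmod (c / (2*PI)) (- s / (2*PI))) in *.
  assert (g0 : 0 <= g) by (unfold g, cmod; apply sqrt_pos).
  set (a := Rabs w). set (u := Rabs c). set (v := Rabs s).
  assert (a0 : 0 <= a) by apply Rabs_pos.
  assert (u0 : 0 <= u) by apply Rabs_pos.
  assert (v0 : 0 <= v) by apply Rabs_pos.
  assert (ew : (r*w)^2 = r*r*(a*a)).
  { assert (a*a = w*w) by (unfold a; rewrite <- Rabs_mult; apply Rabs_pos_eq; nra).
    rewrite H. ring. }
  rewrite Rabs_mult, <- RPow_abs in h3, h4, h5, h6. fold a u v in h3, h4, h5, h6.
  rewrite ew. fold u in h1, Hg. fold v in h2, Hg.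
  set (D := u + v) in *.
  assert (E1 : a*a*D <= 2*Q) by (replace (a*a*D) with (a^2*u + a^2*v) by (unfold D; ring); lra).
  assert (E2 : a*a*a*D <= 2*R0) by (replace (a*a*a*D) with (a^3*u + a^3*v) by (unfold D; ring); lra).
  assert (E0 : D <= 2*P) by (unfold D; lra).
  assert (rr : 0 < r*r) by nra.
  split.
  - apply Rle_trans with (D * (1 + r*r*(a*a))).
    apply Rmult_le_compat_r; nra.
    nra.
  - assert (aD : a * D <= P / r + r * Q).
    { assert (2 * a * r <= 1 + r*r*(a*a)) by (generalize (pow2_ge_0 (r*a-1)); nra).
      assert (r * (a * D) <= P + r*r*Q); [|replace (P/r + r*Q) with ((P + r*r*Q)/r) by (field; lra);
        apply Rmult_le_reg_l with r; auto;
        replace (r * ((P + r*r*Q)/r)) with (P + r*r*Q) by (field; lra); lra].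
      assert (0 <= D) by (unfold D; lra).
      nra. }
    apply Rle_trans with (a * D * (1 + r*r*(a*a))).
    apply Rmult_le_compat_r; [nra|]. apply Rmult_le_compat_l; auto.
    nra.
Qed.

Lemma pw_improper (f g2 g3 g4 : R -> R) r : 0 < r ->
  (forall x, x < -(2*r) -> f x = 0) ->
  (forall x, -(2*r) < x < -r -> f x = g2 x) ->
  (forall x, -r < x < r -> f x = g3 x) ->
  (forall x, r < x < 2*r -> f x = g4 x) ->
  (forall x, 2*r < x -> f x = 0) ->
  ex_RInt g2 (-(2*r)) (-r) -> ex_RInt g3 (-r) r -> ex_RInt g4 r (2*r) ->
  (forall a b, inhabited (Riemann_integrable f a b)) /\
  improper_int f (RInt g2 (-(2*r)) (-r) + RInt g3 (-r) r + RInt g4 r (2*r)).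
Proof.
  intros Hr e1 e2 e3 e4 e5 i2 i3 i4.
  assert (K : forall a b, a <= -(2*r) -> 2*r <= b ->
    ex_RInt f a b /\ RInt f a b = RInt g2 (-(2*r)) (-r) + RInt g3 (-r) r + RInt g4 r (2*r)).
  { intros a b ha hb. apply pw_RInt; auto; lra. }
  assert (Ha : forall a b, inhabited (Riemann_integrable f a b)).
  { intros a b. constructor. apply ex_RInt_Reals_0.
    apply ex_RInt_all with (2*r). intros T hT. apply K; lra. }
  split; auto. split; auto.
  intros eps He. exists (2*r). intros a b ha hb pr.
  rewrite <- RInt_Reals. destruct (K a b ha hb) as [_ ->].
  rewrite Rminus_diag, Rabs_R0. auto.
Qed.

Definition hfun r x :=
  if Rlt_dec x (-(2*r)) then 0 else if Rlt_dec x (-r) then pL0 r x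
  else if Rle_dec x r then x else if Rlt_dec x (2*r) then pR0 r x else 0.

Definition C0 r w := T3 (pL0 r) pM0 (pR0 r) cos r w.
Definition S0 r w := T3 (pL0 r) pM0 (pR0 r) sin r w.
Definition hr r w := C0 r w / (2*PI).
Definition hi r w := - S0 r w / (2*PI).

Section M.
Variable r : R.
Hypothesis Hr : 0 < r.

Lemma h1 x : x < -(2*r) -> hfun r x = 0.
Proof. intros; unfold hfun; destruct Rlt_dec; auto; lra. Qed.
Lemma h2 x : -(2*r) < x < -r -> hfun r x = pL0 r x.
Proof. intros; unfold hfun; destruct Rlt_dec; [lra|]; destruct Rlt_dec; auto; lra. Qed.
Lemma h3 x : -r <= x <= r -> hfun r x = x.
Proof. intros; unfold hfun; destruct Rlt_dec; [lra|]; destruct Rlt_dec; [lra|];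
  destruct Rle_dec; auto; lra. Qed.
Lemma h4 x : r < x < 2*r -> hfun r x = pR0 r x.
Proof. intros; unfold hfun; destruct Rlt_dec; [lra|]; destruct Rlt_dec; [lra|];
  destruct Rle_dec; [lra|]; destruct Rlt_dec; auto; lra. Qed.
Lemma h5 x : 2*r < x -> hfun r x = 0.
Proof. intros; unfold hfun; destruct Rlt_dec; [lra|]; destruct Rlt_dec; [lra|];
  destruct Rle_dec; [lra|]; destruct Rlt_dec; auto; lra. Qed.

Lemma exd_pL0 x : ex_derive (pL0 r) x. Proof. eexists; apply dL0; auto. Qed.
Lemma exd_pR0 x : ex_derive (pR0 r) x. Proof. eexists; apply dR0; auto. Qed.
Lemma exd_pM0 x : ex_derive pM0 x. Proof. eexists; apply dM0. Qed.

Lemma ex_abs (p : R -> R) a b : (forall x, ex_derive p x) -> ex_RInt (fun x => Rabs (p x)) a b.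
Proof.
  intros H. apply exR_cont. intros x. apply cpt_cont.
  apply continuity_pt_comp with (f2 := Rabs). apply cont_cpt, exd_cont; auto.
  apply Rcontinuity_abs.
Qed.

Lemma riem_h : forall a b, inhabited (Riemann_integrable (hfun r) a b).
Proof.
  eapply proj1. apply (pw_improper (hfun r) (pL0 r) pM0 (pR0 r) r Hr).
  all: try (intros; first [apply h1; lra | apply h2; lra | unfold pM0; apply h3; lra | apply h4; lra | apply h5; lra]).
  all: apply exR_der; auto using exd_pL0, exd_pR0, exd_pM0.
Qed.

Lemma absint_h : abs_integrable (hfun r).
Proof.
  split. apply riem_h.
  eexists. eapply proj2. apply (pw_improper (fun x => Rabs (hfun r x)) (fun x => Rabs (pL0 r x))
     (fun x => Rabs (pM0 x)) (fun x => Rabs (pR0 r x)) r Hr).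
  - intros; rewrite h1; auto; apply Rabs_R0.
  - intros; rewrite h2; auto.
  - intros; rewrite h3; auto; lra.
  - intros; rewrite h4; auto.
  - intros; rewrite h5; auto; apply Rabs_R0.
  all: apply ex_abs; auto using exd_pL0, exd_pR0, exd_pM0.
Qed.

Lemma fourier_h : is_fourier (hfun r) (hr r) (hi r).
Proof.
  intros w. split.
  { assert (E : hr r w = RInt (fun x => / (2*PI) * (pL0 r x * cos (w*x))) (-(2*r)) (-r)
       + RInt (fun x => / (2*PI) * (pM0 x * cos (w*x))) (-r) r
       + RInt (fun x => / (2*PI) * (pR0 r x * cos (w*x))) r (2*r)).
    { rewrite !RInt_scalR. unfold hr, C0, T3. unfold Rdiv. ring.
      all: apply exR_der; intros; auto_derive; auto using exd_pL0, exd_pR0, exd_pM0. }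
    rewrite E. eapply proj2. apply pw_improper; [exact Hr|..].
    all: try (intros; first [rewrite h1 by lra | rewrite h2 by lra | rewrite h3 by lra
       | rewrite h4 by lra | rewrite h5 by lra]; unfold pM0, Rdiv; ring).
    all: apply exR_der; intros; auto_derive; auto using exd_pL0, exd_pR0, exd_pM0. }
  { assert (E : hi r w = RInt (fun x => - / (2*PI) * (pL0 r x * sin (w*x))) (-(2*r)) (-r)
       + RInt (fun x => - / (2*PI) * (pM0 x * sin (w*x))) (-r) r
       + RInt (fun x => - / (2*PI) * (pR0 r x * sin (w*x))) r (2*r)).
    { rewrite !RInt_scalR. unfold hi, S0, T3. unfold Rdiv. ring.
      all: apply exR_der; intros; auto_derive; auto using exd_pL0, exd_pR0, exd_pM0. }
    rewrite E. eapply proj2. apply pw_improper; [exact Hr|..].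
    all: try (intros; first [rewrite h1 by lra | rewrite h2 by lra | rewrite h3 by lra
       | rewrite h4 by lra | rewrite h5 by lra]; unfold pM0, Rdiv; ring).
    all: apply exR_der; intros; auto_derive; auto using exd_pL0, exd_pR0, exd_pM0. }
Qed.

End M.

Lemma cpt_plus (f g : R -> R) x : continuity_pt f x -> continuity_pt g x ->
  continuity_pt (fun y => f y + g y) x.
Proof. intros; apply (continuity_pt_plus f g x); auto. Qed.
Lemma cpt_mult (f g : R -> R) x : continuity_pt f x -> continuity_pt g x ->
  continuity_pt (fun y => f y * g y) x.
Proof. intros; apply (continuity_pt_mult f g x); auto. Qed.
Lemma cpt_const c x : continuity_pt (fun _ => c) x.
Proof. apply continuity_pt_const. intros a b; auto. Qed.
Lemma cpt_opp (f : R -> R) x : continuity_pt f x -> continuity_pt (fun y => - f y) x.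
Proof. intros; apply (continuity_pt_opp f x); auto. Qed.

Lemma Rp_half r : 1 <= r -> 1 <= Rpower r (1/2).
Proof.
  intros h. unfold Rpower.
  assert (0 <= ln r).
  { destruct (Req_dec r 1) as [->|ne]. rewrite ln_1; lra.
    rewrite <- ln_1. left; apply ln_increasing; lra. }
  generalize (exp_ineq1_le (1/2 * ln r)). lra.
Qed.

Lemma Rp_32 r : 1 <= r -> r <= Rpower r (3/2).
Proof.
  intros h. replace (3/2) with (1 + 1/2) by field.
  rewrite Rpower_plus, Rpower_1 by lra.
  generalize (Rp_half r h). nra.
Qed.

Section F.
Variable r : R.
Hypothesis Hr : 0 < r.

Lemma vR0a : pR0 r r = r.
Proof. unfold pR0. replace ((r - r)/r) with 0 by (field; lra). unfold q; ring. Qed.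
Lemma vR0b : pR0 r (2*r) = 0.
Proof. unfold pR0. replace ((2*r - r)/r) with 1 by (field; lra). unfold q; ring. Qed.
Lemma vR1a : pR1 r r = 1.
Proof. unfold pR1. replace ((r - r)/r) with 0 by (field; lra). unfold q1; ring. Qed.
Lemma vR1b : pR1 r (2*r) = 0.
Proof. unfold pR1. replace ((2*r - r)/r) with 1 by (field; lra). unfold q1; ring. Qed.
Lemma vR2a : pR2 r r = 0.
Proof. unfold pR2. replace ((r - r)/r) with 0 by (field; lra). unfold q2. field. lra. Qed.
Lemma vR2b : pR2 r (2*r) = 0.
Proof. unfold pR2. replace ((2*r - r)/r) with 1 by (field; lra). unfold q2. field; lra. Qed.

Definition Tk (k : nat) tr w :=
  match k with
  | 0%nat => T3 (pL0 r) pM0 (pR0 r) tr r w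
  | 1%nat => T3 (pL1 r) pM1 (pR1 r) tr r w
  | 2%nat => T3 (pL2 r) pM2 (pR2 r) tr r w
  | _ => T3 (pL3 r) pM3 (pR3 r) tr r w
  end.

Lemma ex_of_is (f g : R -> R) : (forall x, is_derive f x (g x)) -> forall x, ex_derive f x.
Proof. intros H x; eexists; apply H. Qed.

Lemma ch0 w : w * Tk 0 cos w = - Tk 1 sin w /\ w * Tk 0 sin w = Tk 1 cos w.
Proof.
  apply chain.
  - intros x; apply dL0; auto.
  - intros x; apply dM0.
  - intros x; apply dR0; auto.
  - intros x; exists (pL2 r x); apply dL1; auto.
  - intros x; exists (pM2 x); apply dM1.
  - intros x; exists (pR2 r x); apply dR1; auto.
  - unfold pL0. rewrite Ropp_involutive, vR0b. ring.
  - unfold pL0, pM0. rewrite Ropp_involutive, vR0a. ring.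
  - unfold pM0. rewrite vR0a. ring.
  - apply vR0b.
Qed.
Lemma ch1 w : w * Tk 1 cos w = - Tk 2 sin w /\ w * Tk 1 sin w = Tk 2 cos w.
Proof.
  apply chain.
  - intros x; apply dL1; auto.
  - intros x; apply dM1.
  - intros x; apply dR1; auto.
  - intros x; exists (pL3 r x); apply dL2; auto.
  - intros x; exists (pM3 x); apply dM2.
  - intros x; exists (pR3 r x); apply dR2; auto.
  - unfold pL1. rewrite Ropp_involutive, vR1b. ring.
  - unfold pL1, pM1. rewrite Ropp_involutive, vR1a. ring.
  - unfold pM1. rewrite vR1a. ring.
  - apply vR1b.
Qed.
Lemma ch2 w : w * Tk 2 cos w = - Tk 3 sin w /\ w * Tk 2 sin w = Tk 3 cos w.
Proof.
  apply chain.
  - intros x; apply dL2; auto.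
  - intros x; apply dM2.
  - intros x; apply dR2; auto.
  - intros x; apply eL3; auto.
  - intros x; apply eM3.
  - intros x; apply eR3; auto.
  - unfold pL2. rewrite Ropp_involutive, vR2b. ring.
  - unfold pL2, pM2. rewrite Ropp_involutive, vR2a. ring.
  - unfold pM2. rewrite vR2a. ring.
  - apply vR2b.
Qed.

Lemma trb_cos u : Rabs (cos u) <= 1.
Proof. destruct (COS_bound u). apply Rabs_le; lra. Qed.
Lemma trb_sin u : Rabs (sin u) <= 1.
Proof. destruct (SIN_bound u). apply Rabs_le; lra. Qed.
Lemma exd_cos x : ex_derive cos x. Proof. auto_derive; auto. Qed.
Lemma exd_sin x : ex_derive sin x. Proof. auto_derive; auto. Qed.

Lemma bnd0 tr w : (forall x, ex_derive tr x) -> (forall u, Rabs (tr u) <= 1) ->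
  Rabs (Tk 0 tr w) <= 102 * (r*r).
Proof.
  intros e b. simpl.
  eapply Rle_trans. apply (T3_bound _ _ _ _ r w (50*r) r (50*r)); auto.
  intros x; exists (pL1 r x); apply dL0; auto. intros x; exists (pM1 x); apply dM0.
  intros x; exists (pR1 r x); apply dR0; auto. apply bL0; auto. apply bM0. apply bR0; auto.
  lra.
Qed.
Lemma bnd2 tr w : (forall x, ex_derive tr x) -> (forall u, Rabs (tr u) <= 1) ->
  Rabs (Tk 2 tr w) <= 1104.
Proof.
  intros e b. simpl.
  eapply Rle_trans. apply (T3_bound _ _ _ _ r w (552/r) 0 (552/r)); auto.
  intros x; exists (pL3 r x); apply dL2; auto. intros x; exists (pM3 x); apply dM2.
  intros x; exists (pR3 r x); apply dR2; auto. apply bL2; auto. apply bM2. apply bR2; auto.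
  right; field; lra.
Qed.
Lemma bnd3 tr w : (forall x, ex_derive tr x) -> (forall u, Rabs (tr u) <= 1) ->
  Rabs (Tk 3 tr w) <= 2376 / r.
Proof.
  intros e b. simpl.
  eapply Rle_trans. apply (T3_bound _ _ _ _ r w (1188/(r*r)) 0 (1188/(r*r))); auto.
  apply eL3; auto. apply eM3. apply eR3; auto. apply bL3; auto. apply bM3. apply bR3; auto.
  right; field; lra.
Qed.

Lemma key w :
  cmod (hr r w) (hi r w) * (1 + (r*w)^2) <= 2412 * (r*r) /\
  Rabs w * cmod (hr r w) (hi r w) * (1 + (r*w)^2) <= 5958 * r.
Proof.
  destruct (ch0 w) as [a1 a2]. destruct (ch1 w) as [b1 b2]. destruct (ch2 w) as [c1 c2].
  assert (E1 : w^2 * Tk 0 cos w = - Tk 2 cos w).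
  { replace (w^2) with (w*w) by ring. rewrite Rmult_assoc, a1.
    replace (w * - Tk 1 sin w) with (-(w * Tk 1 sin w)) by ring. rewrite b2; ring. }
  assert (E2 : w^2 * Tk 0 sin w = - Tk 2 sin w).
  { replace (w^2) with (w*w) by ring. rewrite Rmult_assoc, a2, b1. ring. }
  assert (E3 : w^3 * Tk 0 cos w = Tk 3 sin w).
  { replace (w^3) with (w * w^2) by ring. rewrite Rmult_assoc, E1.
    replace (w * - Tk 2 cos w) with (-(w * Tk 2 cos w)) by ring. rewrite c1; ring. }
  assert (E4 : w^3 * Tk 0 sin w = - Tk 3 cos w).
  { replace (w^3) with (w * w^2) by ring. rewrite Rmult_assoc, E2.
    replace (w * - Tk 2 sin w) with (-(w * Tk 2 sin w)) by ring. rewrite c2; ring. }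
  destruct (ptwise (Tk 0 cos w) (Tk 0 sin w) w r (102*(r*r)) 1104 (2376/r)) as [k1 k2]; auto.
  - apply bnd0; auto using exd_cos, trb_cos.
  - apply bnd0; auto using exd_sin, trb_sin.
  - rewrite E1, Rabs_Ropp. apply bnd2; auto using exd_cos, trb_cos.
  - rewrite E2, Rabs_Ropp. apply bnd2; auto using exd_sin, trb_sin.
  - rewrite E3. apply bnd3; auto using exd_sin, trb_sin.
  - rewrite E4, Rabs_Ropp. apply bnd3; auto using exd_cos, trb_cos.
  - unfold hr, hi, C0, S0. simpl in k1, k2. split.
    + eapply Rle_trans; [exact k1|]. lra.
    + eapply Rle_trans; [exact k2|]. right; field; lra.
Qed.

End F.

Lemma int_bound (g : R -> R) r K n : 0 < r -> 0 <= n ->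
  (forall x, continuity_pt g x) -> (forall w, 0 <= g w) ->
  (forall w, g w * (1 + (r*w)^2) <= K) -> RInt g (-n) n <= K * (PI / r).
Proof.
  intros Hr Hn Hc Hp Hb.
  assert (X : forall w, 0 < 1 + (r*w)^2) by (intros w; generalize (pow2_ge_0 (r*w)); lra).
  assert (K0 : 0 <= K) by (generalize (Hb 0) (Hp 0) (X 0); nra).
  apply Rle_trans with (RInt (fun w => K * / (1 + (r*w)^2)) (-n) n).
  - apply RInt_le. lra.
    apply exR_cont; intros; apply cpt_cont; auto.
    apply exR_der; intros x; auto_derive. generalize (X x); simpl; lra.
    intros w _. apply Rmult_le_reg_r with (1 + (r*w)^2). apply X.
    rewrite Rmult_assoc, Rinv_l. rewrite Rmult_1_r; auto. generalize (X w); lra.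
  - rewrite RInt_scalR. apply Rmult_le_compat_l; auto. apply atan_int; auto.
    apply exR_der; intros x; auto_derive. generalize (X x); simpl; lra.
Qed.

Section E.
Variable r : R.
Hypothesis Hr : 0 < r.

Lemma cont_T3 (fL fM fR tr : R -> R) w0 :
  (forall x, ex_derive fL x) -> (forall x, ex_derive fM x) -> (forall x, ex_derive fR x) ->
  (forall x, ex_derive tr x) -> (forall u v, Rabs (tr u - tr v) <= Rabs (u - v)) ->
  continuity_pt (fun w => T3 fL fM fR tr r w) w0.
Proof.
  intros eL eM eR et lt. unfold T3.
  apply cpt_plus; [apply cpt_plus|]; apply param_cont; auto; lra.
Qed.

Lemma cont_hr w0 : continuity_pt (hr r) w0.
Proof.
  unfold hr, C0, Rdiv. apply cpt_mult; [|apply cpt_const].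
  apply cont_T3; auto using exd_pL0, exd_pM0, exd_pR0, exd_cos, cos_lip.
Qed.
Lemma cont_hi w0 : continuity_pt (hi r) w0.
Proof.
  unfold hi, S0, Rdiv. apply cpt_mult; [|apply cpt_const]. apply cpt_opp.
  apply cont_T3; auto using exd_pL0, exd_pM0, exd_pR0, exd_sin, sin_lip.
Qed.

Lemma cont_g w0 : continuity_pt (fun w => cmod (hr r w) (hi r w)) w0.
Proof.
  assert (HF : continuity_pt (fun w => hr r w ^ 2 + hi r w ^ 2) w0).
  { apply cpt_plus; simpl; apply cpt_mult; auto using cont_hr, cont_hi;
      apply cpt_mult; auto using cont_hr, cont_hi, cpt_const. }
  exact (continuity_pt_comp _ sqrt w0 HF (continuity_pt_sqrt _
     (Rplus_le_le_0_compat _ _ (pow2_ge_0 _) (pow2_ge_0 _)))).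
Qed.

End E.

Theorem propositionF5 :
  exists A : R, 0 < A /\
  forall r : R, 1 <= r ->
  exists h hr hi : R -> R,
    (forall x : R, -r <= x <= r -> h x = x) /\
    abs_integrable h /\
    is_fourier h hr hi /\
    (exists I1 : R, improper_int (fun w => cmod (hr w) (hi w)) I1 /\
                    I1 <= A * Rpower r (3 / 2)) /\
    (exists I2 : R, improper_int (fun w => Rabs w * cmod (hr w) (hi w)) I2 /\
                    I2 <= A * Rpower r (1 / 2)).
Proof.
  exists (6000 * PI). split. generalize PI_RGT_0; lra.
  intros r Hr1. assert (Hr : 0 < r) by lra.
  assert (HPI := PI_RGT_0).
  exists (hfun r), (hr r), (hi r).
  split. intros x hx; apply h3; auto.
  split. apply absint_h; auto.
  split. apply fourier_h; auto.
  assert (G0 : forall w, 0 <= cmod (hr r w) (hi r w)) by (intros; unfold cmod; apply sqrt_pos).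
  split.
  - destruct (improper_from_bound (fun w => cmod (hr r w) (hi r w)) (2412 * (r*r) * (PI / r)))
      as [I [HI HB]].
    + apply cont_g; auto.
    + auto.
    + intros n hn. apply int_bound; auto. apply cont_g; auto.
      intros w. apply (key r Hr w).
    + exists I. split; auto.
      assert (E : 2412 * (r*r) * (PI / r) = 2412 * PI * r) by (field; lra).
      generalize (Rp_32 r Hr1). nra.
  - destruct (improper_from_bound (fun w => Rabs w * cmod (hr r w) (hi r w)) (5958 * r * (PI / r)))
      as [I [HI HB]].
    + intros; apply cpt_mult. apply Rcontinuity_abs. apply cont_g; auto.
    + intros; apply Rmult_le_pos; auto using Rabs_pos.
    + intros n hn. apply int_bound; auto.
      intros; apply cpt_mult. apply Rcontinuity_abs. apply cont_g; auto.
      intros; apply Rmult_le_pos; auto using Rabs_pos.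
      intros w. apply (key r Hr w).
    + exists I. split; auto.
      assert (E : 5958 * r * (PI / r) = 5958 * PI) by (field; lra).
      generalize (Rp_half r Hr1). nra.
Qed.
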